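(* Extensibility is hereditary: if a pair $(\Gamma,\mathcal{K})$ is extensible (in degree $2d$), then so is any pair $(\Gamma',\mathcal{K}')$ subordinate to $(\Gamma,\mathcal{K})$.
   Context: All lattices even. For a graph $\Gamma$ (edges with multiplicities), let $\mathbb{Z}\Gamma$ be freely generated by the vertices with $v^2=-2$ and $u\cdot v$ the number of edges between $u\ne v$, and $\operatorname{Fano}_{2d}(\Gamma):=(\mathbb{Z}\Gamma+\mathbb{Z}h)/\ker$, with $h^2=2d>0$, $h\cdot v=1$ for all vertices; it is assumed hyperbolic. For an isotropic subgroup $\mathcal{K}$ of the discriminant group $\operatorname{Fano}(\Gamma)^\vee/\operatorname{Fano}(\Gamma)$ (with its $\mathbb{Q}/2\mathbb{Z}$-valued quadratic form), $\operatorname{Fano}(\Gamma,\mathcal{K})$ is the corresponding even finite index extension. For a root lattice $\operatorname{rt}(S,h)$ spanned by $\{r\in S:r^2=-2, r\cdot h=0\}$ and a Weyl chamber $\Delta$ with simple roots $\mathfrak{b}(\Delta)$, lines are $\operatorname{Fn}_\Delta(S,h)=\{l: l^2=-2, l\cdot h=1, l\cdot e\ge0\ \forall e\in\mathfrak{b}(\Delta)\}$. $(\Gamma,\mathcal{K})$ is extensible if there is a Weyl chamber $\Delta$ for $\operatorname{rt}(\operatorname{Fano}(\Gamma,\mathcal{K}),h)$ with $\Gamma\subset\operatorname{Fn}_\Delta(\operatorname{Fano}(\Gamma,\mathcal{K}),h)$. For an induced subgraph $\Gamma'\subset\Gamma$, $\mathcal{K}|_{\Gamma'}:=\bigl((\operatorname{Fano}(\Gamma')\otimes\mathbb{Q})\cap\operatorname{Fano}(\Gamma,\mathcal{K})\bigr)/\operatorname{Fano}(\Gamma')\subset\operatorname{Fano}(\Gamma')^\vee/\operatorname{Fano}(\Gamma')$,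 where $\operatorname{Fano}(\Gamma')$ is identified with the sublattice of $\operatorname{Fano}(\Gamma,\mathcal{K})$ spanned by $h$ and $\Gamma'$. $(\Gamma',\mathcal{K}')$ is subordinate to $(\Gamma,\mathcal{K})$ if $\Gamma'\subset\Gamma$ is an induced subgraph and $\mathcal{K}'\subset\mathcal{K}|_{\Gamma'}$. *)

(* Defs.v *)
From HB Require Import structures.
From mathcomp Require Import all_boot all_order all_algebra.
Set Implicit Arguments. Unset Strict Implicit. Unset Printing Implicit Defensive.
Import Order.TTheory GRing.Theory Num.Theory.
Local Open Scope ring_scope.

(* A graph with edge multiplicities on the finite vertex type V is given by
   m : V -> V -> nat (symmetric; the diagonal is irrelevant).
   Z Gamma + Z h is modelled as the integral points of Q^(option V), where
   [Some v] is the vertex v and [None] is h.  Everything is done inside the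
   rational vector space vec V = Q^(option V) with the (possibly degenerate)
   Gram form; a subgroup of Fano(Gamma) (x) Q = Q^(option V)/rad is
   represented by its full preimage in Q^(option V). *)

Definition vec (V : finType) := {ffun option V -> rat}.

Section Fano.
Variables (V : finType) (m : V -> V -> nat) (d : nat).

Definition gram (i j : option V) : rat :=
  match i, j with
  | None, None => (2 * d)%:R
  | None, Some _ | Some _, None => 1
  | Some u, Some v => if u == v then -2 else (m u v)%:R
  end.

Definition form (x y : vec V) : rat :=
  \sum_(i : option V) \sum_(j : option V) x i * y j * gram i j.

Definition bvec (i : option V) : vec V := [ffun j => (j == i)%:R].
Definition hvec : vec V := bvec None.

Definition is_int (q : rat) : Prop := denq q = 1%Z.
Definition is_even_int (q : rat) : Prop := is_int (q / 2).

Definition integral (x : vec V) : Prop := forall i, is_int (x i).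

Definition rad (x : vec V) : Prop := forall y, form x y = 0.

(* Fano(Gamma) = (Z Gamma + Z h)/ker, as a preimage in Q^(option V) *)
Definition fanoL (x : vec V) : Prop := exists z, integral z /\ rad (x - z).

Definition fanoDual (x : vec V) : Prop :=
  forall z, fanoL z -> is_int (form x z).

(* hyperbolic: the maximal positive definite subspaces have dimension 1 *)
Definition hyperbolic : Prop :=
  (exists x, 0 < form x x) /\
  ~ (exists x y, 0 < form x x /\ 0 < form x x * form y y - form x y ^+ 2).

(* An isotropic subgroup K of Fano(Gamma)^vee/Fano(Gamma) (w.r.t. the
   Q/2Z-valued quadratic form), represented by its preimage M in the dual,
   which is the even overlattice Fano(Gamma, K). *)
Definition isotropic_ext (M : vec V -> Prop) : Prop :=
  [/\ forall x, fanoL x -> M x,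
      forall x, M x -> fanoDual x,
      forall x y, M x -> M y -> M (x + y),
      forall x, M x -> M (- x)
    & forall x, M x -> is_even_int (form x x)].

Definition root (M : vec V -> Prop) (r : vec V) : Prop :=
  [/\ M r, form r r = -2 & form r hvec = 0].

(* A Weyl chamber of rt(S,h) is determined by a regular vector w (one with
   w.r <> 0 for every root r); the positive roots are those with w.r > 0 and
   the simple roots b(Delta) are the indecomposable positive roots. *)
Definition regular (M : vec V -> Prop) (w : vec V) : Prop :=
  forall r, root M r -> form w r != 0.

Definition pos_root (M : vec V -> Prop) (w r : vec V) : Prop :=
  root M r /\ 0 < form w r.

Definition simple_root (M : vec V -> Prop) (w e : vec V) : Prop :=
  pos_root M w e /\
  ~ (exists a b, [/\ pos_root M w a, pos_root M w b & rad (e - (a + b))]).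

Definition line (M : vec V -> Prop) (w l : vec V) : Prop :=
  [/\ M l, form l l = -2, form l hvec = 1 &
      forall e, simple_root M w e -> 0 <= form l e].

Definition extensible (M : vec V -> Prop) : Prop :=
  exists w, regular M w /\ forall v : V, line M w (bvec (Some v)).

End Fano.

Definition subV (V : finType) (S : {set V}) : finType := {x : V | x \in S}.

Definition induced (V : finType) (m : V -> V -> nat) (S : {set V})
  : subV S -> subV S -> nat := fun a b => m (val a) (val b).

Arguments induced {V} m S _ _.

(* Fano(Gamma') (x) Q identified with the span of h and Gamma' in
   Fano(Gamma) (x) Q: extension by zero. *)
Definition embed_fun (V : finType) (S : {set V}) (x : vec (subV S))
  (i : option V) : rat :=
  match i with
  | None => x None
  | Some v => match (insub v : option (subV S)) with
              | Some a => x (Some a)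
              | None => 0
              end
  end.

Definition embed (V : finType) (S : {set V}) (x : vec (subV S)) : vec V :=
  [ffun i : option V => embed_fun x i].

(* (Gamma', K') subordinate to (Gamma, K): Gamma' induced on S, and
   K' contained in K|_Gamma' = ((Fano(Gamma') (x) Q) cap Fano(Gamma,K))/Fano(Gamma') *)
Definition subordinate (V : finType) (m : V -> V -> nat) (d : nat)
  (M : vec V -> Prop) (S : {set V}) (M' : vec (subV S) -> Prop) : Prop :=
  isotropic_ext (induced m S) d M' /\ forall x, M' x -> M (embed x).
Arguments subordinate {V} m d M S M'.

(* Main.v *)
Require Import Defs.
From mathcomp Require Import all_boot all_order all_algebra.
From mathcomp Require Import ring lra.
From Stdlib Require Import Classical.
Set Implicit Arguments. Unset Strict Implicit. Unset Printing Implicit Defensive.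
Import Order.TTheory GRing.Theory Num.Theory.
Local Open Scope ring_scope.
Import Defs.

Lemma sum_option (T : finType) (F : option T -> rat) :
  \sum_(i : option T) F i = F None + \sum_(v : T) F (Some v).
Proof.
rewrite (bigD1 None) //=; congr (_ + _).
rewrite (reindex_omap Some id) //=; first by apply: eq_bigl => v; rewrite eqxx.
by case.
Qed.

Section F.
Variables (V : finType) (m : V -> V -> nat) (m_sym : forall u v, m u v = m v u) (d : nat).

Lemma gram_sym i j : gram m d i j = gram m d j i.
Proof. by case: i => [u|]; case: j => [v|] //=; rewrite eq_sym m_sym. Qed.

Lemma form_sym x y : form m d x y = form m d y x.
Proof.
rewrite /form exchange_big; apply: eq_bigr => i _; apply: eq_bigr => j _.
by rewrite gram_sym (mulrC (x _)).
Qed.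

Lemma formE2 x y : form m d x y = \sum_j y j * (\sum_i x i * gram m d i j).
Proof.
rewrite /form exchange_big; apply: eq_bigr => j _; rewrite mulr_sumr.
by apply: eq_bigr => i _; rewrite mulrCA mulrA.
Qed.

Lemma formDr x y z : form m d x (y + z) = form m d x y + form m d x z.
Proof. by rewrite !formE2 -big_split; apply: eq_bigr => j _; rewrite ffunE mulrDl. Qed.

Lemma formNr x y : form m d x (- y) = - form m d x y.
Proof. by rewrite !formE2 -sumrN; apply: eq_bigr => j _; rewrite ffunE mulNr. Qed.

Lemma formBr x y z : form m d x (y - z) = form m d x y - form m d x z.
Proof. by rewrite formDr formNr. Qed.

Lemma formZr (a : rat) (x y : vec V) : form m d x [ffun i => a * y i] = a * form m d x y.
Proof. by rewrite !formE2 mulr_sumr; apply: eq_bigr => j _; rewrite ffunE mulrA. Qed.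

Lemma formZl (a : rat) (x y : vec V) : form m d [ffun i => a * x i] y = a * form m d x y.
Proof. by rewrite form_sym formZr form_sym. Qed.

Lemma formDl x y z : form m d (y + z) x = form m d y x + form m d z x.
Proof. by rewrite !(form_sym _ x) formDr. Qed.

Lemma form0l y : form m d 0 y = 0.
Proof. by rewrite /form big1 // => i _; rewrite big1 // => j _; rewrite ffunE !mul0r. Qed.

Lemma rad_sym x y : rad m d x -> form m d y x = 0.
Proof. by move=> H; rewrite form_sym H. Qed.

End F.


Section E.
Variables (V : finType) (m : V -> V -> nat) (d : nat) (S : {set V}).

Lemma embed_sum (x : vec (subV S)) (F : option V -> rat) :
  \sum_(j : option V) embed x j * F j =
  \sum_(i : option (subV S)) x i * F (omap val i).
Proof.
rewrite !sum_option !ffunE /=; congr (_ + _).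
rewrite (bigID (fun v => v \in S)) /= [X in _ + X]big1 ?addr0; last first.
  by move=> v vS; rewrite ffunE /= insubF ?mul0r //; apply: negbTE.
rewrite (big_sub S (fun v => embed x (Some v) * F (Some v))).
by apply: eq_bigr => a _; rewrite ffunE /= valK.
Qed.

Lemma gram_embed i j :
  gram m d (omap val i) (omap val j) = gram (induced m S) d i j.
Proof. by case: i => [a|]; case: j => [b|] //=; rewrite val_eqE. Qed.

Lemma form_embed (x y : vec (subV S)) :
  form m d (embed x) (embed y) = form (induced m S) d x y.
Proof.
rewrite formE2 formE2 embed_sum; apply: eq_bigr => j _; congr (_ * _).
by rewrite embed_sum; apply: eq_bigr => i _; rewrite gram_embed.
Qed.

Lemma embed_bvec (i : option (subV S)) : embed (bvec i) = bvec (omap val i).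
Proof.
apply/ffunP => j; rewrite !ffunE.
case: j => [v|] /=; last by rewrite ffunE; case: i.
case: insubP => [a aS av|vS]; rewrite ?ffunE.
  by case: i => [b|] //=; rewrite -av; congr (_%:R); congr nat_of_bool; apply/eqP/eqP => [[->]|[]/val_inj->].
by case: i => [b|] //=; case: eqP => // [[e]]; move: vS; rewrite e (valP b).
Qed.

Lemma embed_hvec : embed (hvec (subV S)) = hvec V.
Proof. exact: embed_bvec. Qed.

End E.


Definition sc (V : finType) (a : rat) (v : vec V) : vec V := [ffun i => a * v i].

Section H.
Variables (V : finType) (m : V -> V -> nat) (m_sym : forall u v, m u v = m v u) (d : nat).

Lemma bvec_sum k (F : option V -> rat) : \sum_j bvec k j * F j = F k.
Proof.
rewrite (bigD1 k) //= big1 ?addr0; first by rewrite ffunE eqxx mul1r.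
by move=> j /negbTE jk; rewrite ffunE jk mul0r.
Qed.

Lemma formSr a x y : form m d x (sc a y) = a * form m d x y.
Proof. exact: formZr. Qed.
Lemma formSl a x y : form m d (sc a x) y = a * form m d x y.
Proof. exact: (formZl m_sym). Qed.

Lemma form_bvec i j : form m d (bvec i) (bvec j) = gram m d i j.
Proof. by rewrite formE2 bvec_sum bvec_sum. Qed.

Lemma rad_embed (S : {set V}) (d_gt0 : (0 < d)%N) (hyp : hyperbolic m d)
  (x : vec (subV S)) : rad (induced m S) d x -> rad m d (embed x).
Proof.
move=> rx y; set X := embed x; set h := hvec V.
have XX : form m d X X = 0 by rewrite /X form_embed rx.
have Xh : form m d X h = 0 by rewrite /X /h -(embed_hvec S) form_embed rx.
have hh : form m d h h = (2 * d)%:R by rewrite /h form_bvec.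
have hpos : 0 < form m d h h.
  by rewrite hh ltr0n muln_gt0 d_gt0.
apply/eqP; apply/negP => /negP tn0; set t := form m d X y in tn0.
set a := - form m d h y / (2 * d)%:R.
set Q := form m d y y + a ^+ 2 * (2 * d)%:R + 2%:R * a * form m d h y.
set s := (1 - Q) / (2%:R * t).
set Y := y + sc a h + sc s X.
have d0 : (2 * d)%:R != 0 :> rat by rewrite pnatr_eq0 muln_eq0 negb_or /= -lt0n d_gt0.

have E1 : form m d h Y = 0.
  rewrite /Y !(formDr, formSr) (form_sym m_sym _ h X) Xh hh /a; field.
  by rewrite pnatr_eq0 -lt0n.
have E2 : form m d Y Y = 1.
  rewrite /Y !(formDr, formDl m_sym, formSr, formSl) ?(form_sym m_sym _ h X) ?(form_sym m_sym _ y X)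
    ?(form_sym m_sym _ y h) -/t.
  rewrite Xh XX hh /s /Q /a; field.
  by rewrite tn0 pnatr_eq0 -lt0n d_gt0.
case: hyp => _ H; apply: H; exists h, Y; split => //.
by rewrite E1 E2 expr0n /= subr0 mulr1.
Qed.

End H.


Section R.
Variables (U : finType) (m : U -> U -> nat) (m_sym : forall u v, m u v = m v u) (d : nat).
Local Notation n := #|{: option U}|.

Lemma sum_reidx (F : option U -> rat) : \sum_i F i = \sum_(k < n) F (enum_val k).
Proof. by rewrite (reindex _ (onW_bij _ (@enum_val_bij _))). Qed.

Definition G : 'M[rat]_n := \matrix_(k, l) gram m d (enum_val k) (enum_val l).
Definition rv (x : vec U) : 'rV[rat]_n := \row_k x (enum_val k).

Lemma formM x y : form m d x y = (rv x *m G *m (rv y)^T) 0 0.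
Proof.
rewrite /form sum_reidx; under eq_bigr do rewrite sum_reidx.
rewrite mxE; under [RHS]eq_bigr do rewrite mxE mulr_suml.
rewrite exchange_big; apply: eq_bigr => k _; apply: eq_bigr => l _.
by rewrite !mxE mulrAC.
Qed.

Lemma rv_inv (v : 'rV[rat]_n) : rv [ffun i => v 0 (enum_rank i)] = v.
Proof. by apply/rowP => k; rewrite !mxE ffunE enum_valK. Qed.

Lemma repr (c : vec U) : (forall x, rad m d x -> \sum_i c i * x i = 0) ->
  exists w, forall x, form m d w x = \sum_i c i * x i.
Proof.
move=> Hc.
have sub : (rv c <= G)%MS.
  rewrite submxE; apply/eqP/rowP => j; rewrite !mxE.
  have GK : G *m cokermx G = 0 := mulmx_coker G.
  move: (cokermx G) GK => K GK.
  pose xj : vec U := [ffun i => K (enum_rank i) j].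
  have rvx : rv xj = (col j K)^T by apply/rowP => k; rewrite !mxE ffunE enum_valK.
  have rxj : rad m d xj.
    move=> z; rewrite formM rvx.
    have -> : (col j K)^T *m G = 0.
      have -> : G = G^T by apply/matrixP => k l; rewrite !mxE gram_sym.
      by rewrite -trmx_mul colE mulmxA GK mul0mx trmx0.
    by rewrite mul0mx mxE.
  move: (Hc _ rxj); rewrite sum_reidx => H; rewrite -[X in _ = X]H; apply: eq_bigr => k _.
  by rewrite !mxE ffunE enum_valK.
exists [ffun i => (rv c *m pinvmx G) 0 (enum_rank i)] => x.
rewrite formM rv_inv mulmxKpV // mxE sum_reidx; apply: eq_bigr => k _.
by rewrite !mxE.
Qed.
End R.


Lemma is_intE q : is_int q -> q \is a Num.int.
Proof. by move=> h; rewrite Qint_def; apply/eqP. Qed.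

Lemma int_ge1 q : is_int q -> 0 < q -> 1 <= q.
Proof.
move=> /is_intE qi q0; have : q \is a Num.nat by rewrite -intrEge0 // ltW.
case/natrP => n e; move: q0; rewrite e; case: n {e} => [|n]; first by rewrite ltxx.
by move=> _; rewrite -natr1 lerDr.
Qed.

Lemma int_nat q : is_int q -> 0 <= q -> exists n : nat, q <= n%:R.
Proof.
move=> /is_intE qi q0; have : q \is a Num.nat by rewrite -intrEge0.
by case/natrP => n ->; exists n.
Qed.

Lemma denom_exists (V : finType) (w : vec V) :
  exists N : rat, 0 < N /\ forall i, is_int (N * w i).
Proof.
exists (\prod_i denq (w i))%:~R; split.
  by rewrite ltr0z prodr_gt0 // => i _; rewrite denq_gt0.
move=> i.
have -> : (\prod_i0 denq (w i0))%:~R * w i = ((numq (w i)) * \prod_(j | j != i) denq (w j))%:~R :> rat.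
  by rewrite (bigD1 i) //= !rmorphM /= numqE; ring.
exact: denq_int.
Qed.

Section P.
Variables (V : finType) (m : V -> V -> nat) (m_sym : forall u v, m u v = m v u) (d : nat).
Variables (M : vec V -> Prop) (HM : isotropic_ext m d M) (w l : vec V).

Lemma pos_nonneg : (forall e, simple_root m d M w e -> 0 <= form m d l e) ->
  forall r, pos_root m d M w r -> 0 <= form m d l r.
Proof.
move=> Hs.
have [N [N0 HN]] := denom_exists w.
have Hint r : M r -> is_int (N * form m d w r).
  move=> Mr; case: HM => _ Hd _ _ _.
  have : fanoL m d (sc N w).
    exists (sc N w); split; first by move=> i; rewrite ffunE.
    by move=> y; rewrite subrr form0l.
  move/(Hd r Mr); rewrite form_sym // (formSl m_sym); done.
suff H : forall k : nat, forall r, pos_root m d M w r -> N * form m d w r <= k%:R ->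
    0 <= form m d l r.
  move=> r pr; have [[Mr _ _] rp] := pr.
  have [k Hk] := int_nat (Hint r Mr) (mulr_ge0 (ltW N0) (ltW rp)).
  exact: H Hk.
elim=> [|k IH] r [rr rpos] Hk.
  by move: Hk; rewrite leNgt mulr_gt0.
have [sr|nsr] := classic (simple_root m d M w r); first exact: Hs.
have [a [b [pa pb rab]]] : exists a b, [/\ pos_root m d M w a, pos_root m d M w b & rad m d (r - (a + b))].
  apply: NNPP => nex; apply: nsr; split => //.
have split y : form m d y r = form m d y a + form m d y b.
  by move: (rad_sym m_sym y rab); rewrite formBr formDr => /eqP; rewrite subr_eq0 => /eqP.
have [[Ma _ _] ap] := pa; have [[Mb _ _] bp] := pb.
have ia := int_ge1 (Hint a Ma) (mulr_gt0 N0 ap).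
have ib := int_ge1 (Hint b Mb) (mulr_gt0 N0 bp).
rewrite split; apply: addr_ge0.
  apply: IH => //; move: Hk; rewrite split mulrDr -natr1; lra.
apply: IH => //; move: Hk; rewrite split mulrDr -natr1; lra.
Qed.
End P.


Theorem corollary3p3 (V : finType) (m : V -> V -> nat)
  (m_sym : forall u v, m u v = m v u) (d : nat) (d_gt0 : (0 < d)%N)
  (hyp : hyperbolic m d)
  (M : vec V -> Prop) (HM : isotropic_ext m d M)
  (S : {set V}) (M' : vec (subV S) -> Prop)
  (Hsub : subordinate m d M S M') :
  extensible m d M -> extensible (induced m S) d M'.
Proof.
move=> [w [Hreg Hlines]].
have [Hiso' Hemb] := Hsub.
have msym' : forall u v, induced m S u v = induced m S v u by move=> u v; exact: m_sym.
pose c : vec (subV S) := [ffun i => form m d w (embed (bvec i))].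
have fe x : form m d w (embed x) = \sum_i c i * x i.
  rewrite formE2 embed_sum; apply: eq_bigr => i _; rewrite ffunE mulrC; congr (_ * _).
  by rewrite embed_bvec formE2 bvec_sum.
have [w' Hw'] : exists w', forall x, form (induced m S) d w' x = \sum_i c i * x i.
  apply: (repr msym') => x rx.
  by rewrite -fe form_sym // (rad_embed m_sym d_gt0 hyp rx).
have Hw x : form (induced m S) d w' x = form m d w (embed x) by rewrite Hw' fe.
have rootE r : root (induced m S) d M' r -> root m d M (embed r).
  case=> Mr rr rh; split; first exact: Hemb.
    by rewrite form_embed.
  by rewrite -(embed_hvec S) form_embed.
exists w'; split.
  by move=> r /rootE rr; rewrite Hw; apply: Hreg.
move=> v; have [Ml ll lh ls] := Hlines (val v).
have ev : embed (bvec (Some v)) = bvec (Some (val v)) by rewrite embed_bvec.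
split.
- case: Hiso' => HL _ _ _ _; apply: HL; exists (bvec (Some v)); split.
    by move=> i; rewrite ffunE; case: (i == Some v).
  by move=> y; rewrite subrr form0l.
- by rewrite -form_embed ev.
- by rewrite -form_embed ev embed_hvec.
- move=> e [[re ep] _]; rewrite -form_embed ev.
  apply: (pos_nonneg m_sym HM ls); split; first exact: rootE.
  by rewrite -Hw.
Qed.
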